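(* Let $X \in \Lambda^2_{14} = \mathfrak{g}_2$ and let $u, v, y \in \mathbb{R}^7$ be mutually orthogonal. Then $$ X(u \times y, v \times y) = |y|^2 X(u,v) + X(y, (u \times v) \times y). $$
   Context: Equip $\mathbb{R}^7$ with its standard inner product and basis. Let $\varphi = e_{123} - e_{167} - e_{527} - e_{563} - e_{415} - e_{426} - e_{437}$ ($e_{ijk} = e_i\wedge e_j \wedge e_k$) and define the cross product by $\langle u\times v, w\rangle = \varphi(u,v,w)$. A skew bilinear form $X$ is identified with the operator $X$ given by $X(u,v) = \langle X(u),v\rangle$. $\Lambda^2_{14} = \mathfrak{g}_2$ is the set of skew bilinear forms $X$ on $\mathbb{R}^7$ such that $X(v\times w) = X(v)\times w + v \times X(w)$ for all $v,w$ (equivalently $X(u, v\times w) + X(v, w\times u) + X(w, u \times v) = 0$ for all $u,v,w$). *)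

(* Defs.v *)
From mathcomp Require Import all_boot all_order all_algebra.
From mathcomp Require Import reals.
Set Implicit Arguments. Unset Strict Implicit. Unset Printing Implicit Defensive.
Import Order.TTheory GRing.Theory Num.Theory.
Local Open Scope ring_scope.

Section G2.
Variable R : realType.
Notation vec := 'rV[R]_7.

(* coordinate i (1-based, as in the paper) of a vector *)
Definition coord (u : vec) (i : nat) : R := u ord0 (inord i.-1).

Definition dot (u v : vec) : R := \sum_(i < 7) u ord0 i * v ord0 i.

(* e_{ijk} = e_i /\ e_j /\ e_k evaluated on (u,v,w): the 3x3 determinant *)
Definition e3 (i j k : nat) (u v w : vec) : R :=
  coord u i * (coord v j * coord w k - coord v k * coord w j)
  - coord u j * (coord v i * coord w k - coord v k * coord w i)
  + coord u k * (coord v i * coord w j - coord v j * coord w i).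

Definition phi (u v w : vec) : R :=
  e3 1 2 3 u v w - e3 1 6 7 u v w - e3 5 2 7 u v w - e3 5 6 3 u v w
  - e3 4 1 5 u v w - e3 4 2 6 u v w - e3 4 3 7 u v w.

(* cross product: <u x v, w> = phi(u,v,w), i.e. (u x v)_k = phi(u,v,e_k) *)
Definition cross (u v : vec) : vec :=
  \row_(k < 7) phi u v (delta_mx ord0 k).

(* a bilinear form on R^7 is represented by its matrix X: X(u,v) = u X v^T *)
Definition bform (X : 'M[R]_7) (u v : vec) : R := (u *m X *m v^T) ord0 ord0.

Definition skew (X : 'M[R]_7) : Prop := X^T = - X.

(* the associated operator: <X(u), v> = X(u,v), i.e. X(u) = u X *)
Definition op (X : 'M[R]_7) (u : vec) : vec := u *m X.

Definition in_g2 (X : 'M[R]_7) : Prop :=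
  skew X /\
  forall v w : vec, op X (cross v w) = cross (op X v) w + cross v (op X w).

End G2.

(* Main.v *)
Require Import Defs.
From mathcomp Require Import all_boot all_order all_algebra.
From mathcomp Require Import reals ring.
Import GRing.Theory Num.Theory.
Local Open Scope ring_scope.
Section S.
Variable R : realType.
Lemma deltaE k j : (k < 7)%N -> (j < 7)%N -> (delta_mx ord0 (inord k) : 'rV[R]_7) ord0 (inord j) = (k == j)%:R.
Proof. by move=> hk hj; rewrite mxE eqxx /= -(inj_eq val_inj) /= !inordK // eq_sym. Qed.
Lemma sum7 (F : 'I_7 -> R) : \sum_(i<7) F i = F (inord 0) + F (inord 1) + F (inord 2) + F (inord 3) + F (inord 4) + F (inord 5) + F (inord 6).
Proof.
rewrite 7!big_ord_recl big_ord0 addr0 !addrA.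
by congr (_+_+_+_+_+_+_); congr (F _); apply/val_inj; rewrite /= inordK.
Qed.
Lemma crossE (a b : 'rV[R]_7) k : (cross a b) ord0 k = phi a b (delta_mx ord0 k).
Proof. by rewrite mxE. Qed.
Lemma cross0 (a b : 'rV[R]_7) : cross a b ord0 (inord 0) = (a ord0 (inord 1) * b ord0 (inord 2) - a ord0 (inord 2) * b ord0 (inord 1)) + (a ord0 (inord 3) * b ord0 (inord 4) - a ord0 (inord 4) * b ord0 (inord 3)) + - (a ord0 (inord 5) * b ord0 (inord 6) - a ord0 (inord 6) * b ord0 (inord 5)).
Proof. by rewrite crossE /Defs.phi /e3 /Defs.coord /= !deltaE //=; ring. Qed.
Lemma cross1 (a b : 'rV[R]_7) : cross a b ord0 (inord 1) = - (a ord0 (inord 0) * b ord0 (inord 2) - a ord0 (inord 2) * b ord0 (inord 0)) + (a ord0 (inord 3) * b ord0 (inord 5) - a ord0 (inord 5) * b ord0 (inord 3)) + (a ord0 (inord 4) * b ord0 (inord 6) - a ord0 (inord 6) * b ord0 (inord 4)).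
Proof. by rewrite crossE /Defs.phi /e3 /Defs.coord /= !deltaE //=; ring. Qed.
Lemma cross2 (a b : 'rV[R]_7) : cross a b ord0 (inord 2) = (a ord0 (inord 0) * b ord0 (inord 1) - a ord0 (inord 1) * b ord0 (inord 0)) + (a ord0 (inord 3) * b ord0 (inord 6) - a ord0 (inord 6) * b ord0 (inord 3)) + - (a ord0 (inord 4) * b ord0 (inord 5) - a ord0 (inord 5) * b ord0 (inord 4)).
Proof. by rewrite crossE /Defs.phi /e3 /Defs.coord /= !deltaE //=; ring. Qed.
Lemma cross3 (a b : 'rV[R]_7) : cross a b ord0 (inord 3) = - (a ord0 (inord 0) * b ord0 (inord 4) - a ord0 (inord 4) * b ord0 (inord 0)) + - (a ord0 (inord 1) * b ord0 (inord 5) - a ord0 (inord 5) * b ord0 (inord 1)) + - (a ord0 (inord 2) * b ord0 (inord 6) - a ord0 (inord 6) * b ord0 (inord 2)).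
Proof. by rewrite crossE /Defs.phi /e3 /Defs.coord /= !deltaE //=; ring. Qed.
Lemma cross4 (a b : 'rV[R]_7) : cross a b ord0 (inord 4) = (a ord0 (inord 0) * b ord0 (inord 3) - a ord0 (inord 3) * b ord0 (inord 0)) + - (a ord0 (inord 1) * b ord0 (inord 6) - a ord0 (inord 6) * b ord0 (inord 1)) + (a ord0 (inord 2) * b ord0 (inord 5) - a ord0 (inord 5) * b ord0 (inord 2)).
Proof. by rewrite crossE /Defs.phi /e3 /Defs.coord /= !deltaE //=; ring. Qed.
Lemma cross5 (a b : 'rV[R]_7) : cross a b ord0 (inord 5) = (a ord0 (inord 0) * b ord0 (inord 6) - a ord0 (inord 6) * b ord0 (inord 0)) + (a ord0 (inord 1) * b ord0 (inord 3) - a ord0 (inord 3) * b ord0 (inord 1)) + - (a ord0 (inord 2) * b ord0 (inord 4) - a ord0 (inord 4) * b ord0 (inord 2)).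
Proof. by rewrite crossE /Defs.phi /e3 /Defs.coord /= !deltaE //=; ring. Qed.
Lemma cross6 (a b : 'rV[R]_7) : cross a b ord0 (inord 6) = - (a ord0 (inord 0) * b ord0 (inord 5) - a ord0 (inord 5) * b ord0 (inord 0)) + (a ord0 (inord 1) * b ord0 (inord 4) - a ord0 (inord 4) * b ord0 (inord 1)) + (a ord0 (inord 2) * b ord0 (inord 3) - a ord0 (inord 3) * b ord0 (inord 2)).
Proof. by rewrite crossE /Defs.phi /e3 /Defs.coord /= !deltaE //=; ring. Qed.
Ltac expand2 := rewrite /dot !sum7 !(cross0, cross1, cross2, cross3, cross4, cross5, cross6).
Ltac expand := rewrite /dot !sum7 /Defs.coord /=; rewrite !crossE /Defs.phi /e3 /Defs.coord /=; rewrite ?crossE /Defs.phi /e3 /Defs.coord /=; rewrite !deltaE //=.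
Lemma L1 (w v y : 'rV[R]_7) : dot (cross w y) (cross v y) = dot w v * dot y y - dot w y * dot v y.
Proof. expand2. ring. Qed.
Lemma L2 (u w v y : 'rV[R]_7) : dot (cross u w) (cross v y) - dot w (cross (cross u v) y)
  = dot u v * dot w y - 2 * (dot u y * dot w v) + dot u w * dot v y.
Proof. expand2. ring. Qed.
Lemma dotDl (a b c : 'rV[R]_7) : dot (a + b) c = dot a c + dot b c.
Proof. by rewrite /dot -big_split; apply: eq_bigr => i _; rewrite mxE mulrDl. Qed.
Lemma bformE (X : 'M[R]_7) (a b : 'rV[R]_7) : bform X a b = dot (op X a) b.
Proof. rewrite /bform /dot /op mxE; apply: eq_bigr => i _; by rewrite [X in _ * X]mxE. Qed.
End S.
Theorem proposition2p1 (R : realType) (X : 'M[R]_7) (u v y : 'rV[R]_7) :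
  in_g2 X ->
  dot u v = 0 -> dot u y = 0 -> dot v y = 0 ->
  bform X (cross u y) (cross v y) =
    dot y y * bform X u v + bform X y (cross (cross u v) y).
Proof.
move=> [_ HX] huv huy hvy.
rewrite !bformE HX dotDl L1 hvy mulr0 subr0 mulrC; congr (_ + _).
apply/eqP; rewrite -subr_eq0; apply/eqP.
by rewrite L2 huv huy hvy !(mulr0, mul0r) subr0 addr0.
Qed.
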